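(* Let $\mathbf{W}=\langle W;\to,\neg,{}^{+},{}^{-},1\rangle$ be a quasi-Wajsberg* algebra and $\mu$ the congruence on $\mathbf{W}$ defined by $\langle x,y\rangle\in\mu$ iff $x\le y$ and $y\le x$. Then the quotient $\mathbf{W}/\mu=\langle W/\mu;\to,\neg,1/\mu\rangle$ is a Wajsberg*-algebra.
   Context: A quasi-Wajsberg* algebra is an algebra $\langle W;\to,\neg,{}^{+},{}^{-},1\rangle$ of type $\langle2,1,1,1,0\rangle$ such that for all $x,y,z\in W$: (QW*1) $x\to y=\neg y\to\neg x$; (QW*2) $(x\to 1)\to((y\to 1)\to z)=(y\to 1)\to((x\to 1)\to z)$; (QW*3) $(1\to x)\to 1=1$; (QW*4) $(z\to z)\to(x\to y)=x\to y$; (QW*5) $(1\to 1)\to x^{+}=((1\to 1)\to x)^{+}=(x\to 1)\to 1$ and $(1\to 1)\to x^{-}=((1\to 1)\to x)^{-}=(x\to\neg 1)\to\neg 1$; (QW*6) $x\to y=(y^{+}\to x^{-})\to(x^{+}\to y^{-})$; (QW*7) $\neg(x\to y)=y\to x$; (QW*8) $\neg\neg x=x$; (QW*9) $(x\to(\neg x\to y))^{+}=x^{+}\to(\neg x^{+}\to y^{+})$; (QW*10) $x\vee y=y\vee x$; (QW*11) $x\vee(y\vee z)=(x\vee y)\vee z$; (QW*12) $x\to(y\vee z)=(x\to y)\vee(x\to z)$; where $x\vee y:=((x^{+}\to y^{+})^{+}\to(\neg x)^{-})\to((y^{-}\to x^{-})^{-}\to x^{-})$. Conventions: ${}^+,{}^-$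 bind tighter than $\neg$, which binds tighter than $\to$. Put $0:=1\to 1$ and $x\le y$ iff $x\vee y=0\to y$. The quotient operations are $(x/\mu)\to(y/\mu)=(x\to y)/\mu$ and $\neg(x/\mu)=(\neg x)/\mu$. A Wajsberg*-algebra is an algebra $\langle M;\to,\neg,1\rangle$ of type $\langle2,1,0\rangle$ such that for all $x,y,z\in M$: (M1) $x\to y=\neg y\to\neg x$; (M2) $(x\to 1)\to((y\to 1)\to z)=(y\to 1)\to((x\to 1)\to z)$; (M3) $(1\to x)\to 1=1$; (M4) $(y\to y)\to x=x$; (M5) $x\to y=(y^{+}\to x^{-})\to(x^{+}\to y^{-})$; (M6) $\neg(x\to y)=y\to x$; (M7) $\neg\neg x=x$; (M8) $(x\to(\neg x\to y))^{+}=x^{+}\to(\neg x^{+}\to y^{+})$; (M9) $x\vee y=y\vee x$; (M10) $x\vee(y\vee z)=(x\vee y)\vee z$; (M11) $x\to(y\vee z)=(x\to y)\vee(x\to z)$; where $x^{+}:=(x\to 1)\to 1$, $x^{-}:=(x\to\neg 1)\to\neg 1$ and $x\vee y:=((x^{+}\to y^{+})^{+}\to(\neg x)^{-})\to((y^{-}\to x^{-})^{-}\to x^{-})$. *)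

(* Defs.v *)
From Stdlib Require Import ClassicalEpsilon.
Set Implicit Arguments.

Section QW.
Variable W : Type.
Variables (imp : W -> W -> W) (neg : W -> W) (pl mi : W -> W) (one : W).

Definition qw_join (x y : W) : W :=
  imp (imp (pl (imp (pl x) (pl y))) (mi (neg x)))
      (imp (mi (imp (mi y) (mi x))) (mi x)).

Definition qw_zero : W := imp one one.

Definition qw_le (x y : W) : Prop := qw_join x y = imp qw_zero y.

Definition qw_mu (x y : W) : Prop := qw_le x y /\ qw_le y x.

Record quasi_wajsberg_star : Prop := {
  QW1 : forall x y, imp x y = imp (neg y) (neg x);
  QW2 : forall x y z, imp (imp x one) (imp (imp y one) z)
                     = imp (imp y one) (imp (imp x one) z);
  QW3 : forall x, imp (imp one x) one = one;
  QW4 : forall x y z, imp (imp z z) (imp x y) = imp x y;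
  QW5a : forall x, imp (imp one one) (pl x) = pl (imp (imp one one) x);
  QW5b : forall x, pl (imp (imp one one) x) = imp (imp x one) one;
  QW5c : forall x, imp (imp one one) (mi x) = mi (imp (imp one one) x);
  QW5d : forall x, mi (imp (imp one one) x) = imp (imp x (neg one)) (neg one);
  QW6 : forall x y, imp x y = imp (imp (pl y) (mi x)) (imp (pl x) (mi y));
  QW7 : forall x y, neg (imp x y) = imp y x;
  QW8 : forall x, neg (neg x) = x;
  QW9 : forall x y, pl (imp x (imp (neg x) y))
                   = imp (pl x) (imp (neg (pl x)) (pl y));
  QW10 : forall x y, qw_join x y = qw_join y x;
  QW11 : forall x y z, qw_join x (qw_join y z) = qw_join (qw_join x y) z;
  QW12 : forall x y z, imp x (qw_join y z) = qw_join (imp x y) (imp x z)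
}.

Definition mu_congruence : Prop :=
  (forall x, qw_mu x x) /\
  (forall x y, qw_mu x y -> qw_mu y x) /\
  (forall x y z, qw_mu x y -> qw_mu y z -> qw_mu x z) /\
  (forall x x' y y', qw_mu x x' -> qw_mu y y' -> qw_mu (imp x y) (imp x' y')) /\
  (forall x x', qw_mu x x' -> qw_mu (neg x) (neg x')).

Definition qclass (x : W) : W -> Prop := fun y => qw_mu x y.
Definition Wmu : Type := { A : W -> Prop | exists x, A = qclass x }.
Definition cls (x : W) : Wmu := exist _ (qclass x) (ex_intro _ x eq_refl).
Definition rep (A : Wmu) : W :=
  proj1_sig (constructive_indefinite_description _ (proj2_sig A)).
Definition qimp (A B : Wmu) : Wmu := cls (imp (rep A) (rep B)).
Definition qneg (A : Wmu) : Wmu := cls (neg (rep A)).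
Definition qone : Wmu := cls one.
End QW.

Section WS.
Variable M : Type.
Variables (imp : M -> M -> M) (neg : M -> M) (one : M).
Definition ws_plus (x : M) : M := imp (imp x one) one.
Definition ws_minus (x : M) : M := imp (imp x (neg one)) (neg one).
Definition ws_join (x y : M) : M :=
  imp (imp (ws_plus (imp (ws_plus x) (ws_plus y))) (ws_minus (neg x)))
      (imp (ws_minus (imp (ws_minus y) (ws_minus x))) (ws_minus x)).

Record wajsberg_star : Prop := {
  M1 : forall x y, imp x y = imp (neg y) (neg x);
  M2 : forall x y z, imp (imp x one) (imp (imp y one) z)
                    = imp (imp y one) (imp (imp x one) z);
  M3 : forall x, imp (imp one x) one = one;
  M4 : forall x y, imp (imp y y) x = x;
  M5 : forall x y, imp x y
        = imp (imp (ws_plus y) (ws_minus x)) (imp (ws_plus x) (ws_minus y));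
  M6 : forall x y, neg (imp x y) = imp y x;
  M7 : forall x, neg (neg x) = x;
  M8 : forall x y, ws_plus (imp x (imp (neg x) y))
        = imp (ws_plus x) (imp (neg (ws_plus x)) (ws_plus y));
  M9 : forall x y, ws_join x y = ws_join y x;
  M10 : forall x y z, ws_join x (ws_join y z) = ws_join (ws_join x y) z;
  M11 : forall x y z, imp x (ws_join y z) = ws_join (imp x y) (imp x z)
}.
End WS.

(* Main.v *)
Require Import Defs.
From Stdlib Require Import ClassicalEpsilon FunctionalExtensionality PropExtensionality ProofIrrelevance.

Lemma exist_irr_aux (A : Type) (P : A -> Prop) (a b : A) (pa : P a) (pb : P b) :
  a = b -> exist P a pa = exist P b pb.
Proof. intros e; subst; f_equal; apply proof_irrelevance. Qed.

Theorem proposition4p3 (W : Type) (imp : W -> W -> W) (neg : W -> W)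
  (pl mi : W -> W) (one : W) :
  quasi_wajsberg_star imp neg pl mi one ->
  mu_congruence imp neg pl mi one /\
  wajsberg_star (@qimp W imp neg pl mi one) (@qneg W imp neg pl mi one)
                (@qone W imp neg pl mi one).
Proof.
  intros H. destruct H as [Q1 Q2 Q3 Q4 Q5a Q5b Q5c Q5d Q6 Q7 Q8 Q9 Q10 Q11 Q12].
  set (z0 := imp one one) in *.
  assert (F3 : forall x y, imp z0 (imp x y) = imp x y) by (intros; apply Q4).
  assert (E : forall u, imp u u = z0).
  { assert (N0' : neg z0 = z0) by (unfold z0; apply Q7).
    intros u. rewrite <- (F3 u u). rewrite (Q1 z0 (imp u u)), Q7, N0'. unfold z0. apply Q4. }
  assert (O1 : imp z0 one = one) by apply Q3.
  assert (N0 : neg z0 = z0) by (unfold z0; apply Q7).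
  assert (N1 : neg one = imp one z0) by (rewrite <- O1 at 1; apply Q7).
  assert (P0 : pl z0 = z0).
  { rewrite <- (E z0) at 1. rewrite Q5b, O1. reflexivity. }
  assert (M0 : mi z0 = z0).
  { rewrite <- (E z0) at 1. rewrite Q5d. rewrite N1, F3. apply E. }
  assert (JJ : forall x, qw_join imp neg pl mi x x = imp z0 x).
  { intros x. unfold qw_join. rewrite (E (pl x)), (E (mi x)), P0, M0.
    rewrite (Q6 z0 x), M0, P0. f_equal.
    rewrite Q5c, Q5d, <- (Q1 one x).
    rewrite <- (Q7 z0 (pl x)), Q5a, Q5b.
    rewrite (Q1 (imp one x) (neg one)), Q8, Q7. symmetry. apply Q7. }
  assert (CR : forall a y, imp a (imp z0 y) = imp a y).
  { intros a y. rewrite <- JJ, Q12, JJ. apply F3. }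
  assert (NR : forall u, imp u z0 = imp z0 (neg u)).
  { intros u. rewrite (Q1 u z0), N0. reflexivity. }
  assert (CL : forall u v, imp (imp z0 u) v = imp u v).
  { intros u v. rewrite (Q1 (imp z0 u) v), Q7, NR, CR. symmetry. apply Q1. }
  assert (C : forall x y, imp x y = imp (imp z0 x) (imp z0 y)).
  { intros. rewrite CL, CR. reflexivity. }
  assert (FJ : forall x y, imp z0 (qw_join imp neg pl mi x y) = qw_join imp neg pl mi x y).
  { intros. unfold qw_join. apply F3. }
  assert (JR : forall x y, qw_join imp neg pl mi x y
                 = qw_join imp neg pl mi (imp z0 x) (imp z0 y)).
  { intros. rewrite <- Q12. symmetry. apply FJ. }
  assert (MU : forall x y, qw_mu imp neg pl mi one x y <-> imp z0 x = imp z0 y).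
  { intros x y. change (qw_join imp neg pl mi x y = imp z0 y /\ qw_join imp neg pl mi y x = imp z0 x <-> imp z0 x = imp z0 y). split.
    - intros [h1 h2]. rewrite Q10 in h2. congruence.
    - intros h. split.
      + rewrite JR, h, <- JR, JJ. reflexivity.
      + rewrite JR, <- h, <- JR, JJ. reflexivity. }
  assert (NEGR : forall x, imp z0 (neg x) = imp (imp z0 x) z0).
  { intros x. rewrite <- NR, CL. reflexivity. }
  split.
  { unfold mu_congruence. split; [|split; [|split; [|split]]].
    - intros x. apply MU. reflexivity.
    - intros x y H. apply MU. apply MU in H. congruence.
    - intros x y w H H0. apply MU in H. apply MU in H0. apply MU. congruence.
    - intros x x' y y' H H0. apply MU in H. apply MU in H0. apply MU. rewrite !F3, (C x y), (C x' y'). congruence.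
    - intros x x' H. apply MU in H. apply MU. rewrite !NEGR. congruence. }
  set (Cl := @cls W imp neg pl mi one).
  assert (CLS_EQ : forall x y, qw_mu imp neg pl mi one x y -> Cl x = Cl y).
  { intros x y h. unfold Cl, cls. apply exist_irr_aux.
    apply functional_extensionality. intros w. apply propositional_extensionality.
    unfold qclass. rewrite !MU. apply MU in h. split; congruence. }
  assert (REP : forall x, imp z0 (@rep W imp neg pl mi one (Cl x)) = imp z0 x).
  { intros x. unfold rep.
    destruct (constructive_indefinite_description _ _) as [x' e]. simpl.
    simpl in e. assert (h := f_equal (fun f => f x) e). simpl in h.
    unfold qclass in h. assert (hm : qw_mu imp neg pl mi one x' x).
    { rewrite <- h. apply MU. reflexivity. }
    apply MU in hm. exact hm. }
  assert (SURJ : forall A : Wmu imp neg pl mi one, exists x, A = Cl x).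
  { intros [P [x e]]. exists x. subst P. unfold Cl, cls. apply exist_irr_aux. reflexivity. }
  assert (QIMP : forall x y, qimp (Cl x) (Cl y) = Cl (imp x y)).
  { intros x y. unfold qimp. apply CLS_EQ. apply MU. rewrite !F3.
    rewrite (C (rep _) (rep _)), (C x y), !REP. reflexivity. }
  assert (QNEG : forall x, qneg (Cl x) = Cl (neg x)).
  { intros x. unfold qneg. apply CLS_EQ. apply MU. rewrite !NEGR, REP. reflexivity. }
  assert (QONE : qone imp neg pl mi one = Cl one) by reflexivity.
  assert (QPLUS : forall x, ws_plus (qimp (neg:=neg) (pl:=pl) (mi:=mi) (one:=one)) (qone imp neg pl mi one) (Cl x) = Cl (pl x)).
  { intros x. unfold ws_plus. rewrite QONE, !QIMP. apply CLS_EQ. apply MU.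
    rewrite F3, Q5a, Q5b. reflexivity. }
  assert (QMINUS : forall x, ws_minus (qimp (neg:=neg) (pl:=pl) (mi:=mi) (one:=one)) (qneg (imp:=imp) (pl:=pl) (mi:=mi) (one:=one)) (qone imp neg pl mi one) (Cl x) = Cl (mi x)).
  { intros x. unfold ws_minus. rewrite QONE, QNEG, !QIMP. apply CLS_EQ. apply MU.
    rewrite F3, Q5c, Q5d. reflexivity. }
  assert (QJOIN : forall x y, ws_join (qimp (neg:=neg) (pl:=pl) (mi:=mi) (one:=one)) (qneg (imp:=imp) (pl:=pl) (mi:=mi) (one:=one)) (qone imp neg pl mi one) (Cl x) (Cl y) = Cl (qw_join imp neg pl mi x y)).
  { intros x y. unfold ws_join.
    repeat (first [rewrite QPLUS | rewrite QMINUS | rewrite QIMP | rewrite QNEG]). reflexivity. }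
  constructor.
  - intros A B. destruct (SURJ A) as [x ->]. destruct (SURJ B) as [y ->].
    rewrite !QNEG, !QIMP. f_equal. apply Q1.
  - intros A B D. destruct (SURJ A) as [x ->]. destruct (SURJ B) as [y ->].
    destruct (SURJ D) as [w ->]. rewrite QONE, !QIMP. f_equal. apply Q2.
  - intros A. destruct (SURJ A) as [x ->]. rewrite QONE, !QIMP. f_equal. apply Q3.
  - intros A B. destruct (SURJ A) as [x ->]. destruct (SURJ B) as [y ->].
    rewrite !QIMP. apply CLS_EQ. apply MU. rewrite F3, E. reflexivity.
  - intros A B. destruct (SURJ A) as [x ->]. destruct (SURJ B) as [y ->].
    rewrite !QPLUS, !QMINUS, !QIMP. f_equal. apply Q6.
  - intros A B. destruct (SURJ A) as [x ->]. destruct (SURJ B) as [y ->].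
    rewrite !QIMP, QNEG. f_equal. apply Q7.
  - intros A. destruct (SURJ A) as [x ->]. rewrite !QNEG. f_equal. apply Q8.
  - intros A B. destruct (SURJ A) as [x ->]. destruct (SURJ B) as [y ->].
    rewrite !QNEG, !QIMP, !QPLUS, !QNEG, !QIMP. f_equal. apply Q9.
  - intros A B. destruct (SURJ A) as [x ->]. destruct (SURJ B) as [y ->].
    rewrite !QJOIN. f_equal. apply Q10.
  - intros A B D. destruct (SURJ A) as [x ->]. destruct (SURJ B) as [y ->].
    destruct (SURJ D) as [w ->]. rewrite !QJOIN. f_equal. apply Q11.
  - intros A B D. destruct (SURJ A) as [x ->]. destruct (SURJ B) as [y ->].
    destruct (SURJ D) as [w ->]. rewrite !QJOIN, !QIMP, !QJOIN. f_equal. apply Q12.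
Qed.
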